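(* For all sufficiently large $\alpha$, every error-free uncertain priors coding scheme $(E,D)$ (possibly using the shared random string) has, for some pair $(P,Q)\in\mathcal{F}_\alpha$, expected codeword length $\mathbb{E}_{x\sim P,R}[|E(x,\alpha,R,P)|]\geq 2\log k-2\log\log k$, where $k$ is as in the definition of $\mathcal{F}_\alpha$.
   Context: All logarithms are base 2. For $\alpha\geq1$, $P,Q\in\Delta(M)$ are $\alpha$-close if $\frac{1}{\alpha}Q(x)\leq P(x)\leq\alpha Q(x)$ for all $x\in M$. An error-free uncertain priors coding scheme is a pair $E:M\times\mathbb{N}\times\{0,1\}^{\mathbb{N}}\times\Delta(M)\to\{0,1\}^*$, $D:\{0,1\}^*\times\mathbb{N}\times\{0,1\}^{\mathbb{N}}\times\Delta(M)\to M$ such that for every $x\in M$, $\alpha\in\mathbb{N}$, $R\in\{0,1\}^{\mathbb{N}}$, $P\in\Delta(M)$ and every $Q$ $\alpha$-close to $P$, $D(E(x,\alpha,R,P),\alpha,R,Q)=x$; $R$ is uniformly random in expectations. The family $\mathcal{F}_\alpha$: let $k$ be the largest integer with $k\sqrt{\log k}\leq\alpha$, and let $M$ be a message set of size $k^2+1$. For each $m\in M$ and $S\subseteq M$ with $|S|=k+1$, $m\in S$, define $P_{m,S}(m)=1-1/\log k$, $P_{m,S}(x)=1/(k^2\log k)$ for $x\neq m$; $Q_S(x)=1/(k\sqrt{\log k})$ for $x\in S$ and $Q_S(x)=\frac{1}{k^2-k}\left(1-\frac{k+1}{k\sqrt{\log k}}\right)$ for $x\notin S$. $\mathcal{F}_\alpha$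 is the set of all pairs $(P_{m,S},Q_S)$; for sufficiently large $\alpha$ each such pair is $\alpha$-close. *)

(* Defs.v *)
From Stdlib Require Import Reals.
From mathcomp Require Import all_boot.
Set Implicit Arguments. Unset Strict Implicit. Unset Printing Implicit Defensive.

Local Open Scope R_scope.

Definition log2 (x : R) : R := ln x / ln 2.

Definition rsum (N : nat) (f : 'I_N -> R) : R := \big[Rplus/0]_(x : 'I_N) f x.

Definition is_dist (N : nat) (P : 'I_N -> R) : Prop :=
  (forall x, 0 <= P x) /\ rsum P = 1.

Definition close (N : nat) (a : R) (P Q : 'I_N -> R) : Prop :=
  forall x, / a * Q x <= P x /\ P x <= a * Q x.

(** Shared random strings are R : nat -> bool (an element of {0,1}^N). *)
Definition encoder (N : nat) :=
  'I_N -> nat -> (nat -> bool) -> ('I_N -> R) -> seq bool.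
Definition decoder (N : nat) :=
  seq bool -> nat -> (nat -> bool) -> ('I_N -> R) -> 'I_N.

(** Error-free uncertain priors coding scheme (alpha ranges over naturals
    alpha >= 1, the range where alpha-closeness is defined). *)
Definition error_free (N : nat) (E : encoder N) (D : decoder N) : Prop :=
  forall (x : 'I_N) (a : nat) (rnd : nat -> bool) (P Q : 'I_N -> R),
    (1 <= a)%nat -> is_dist P -> is_dist Q -> close (INR a) P Q ->
    D (E x a rnd P) a rnd Q = x.

(** Uniform (coin-flipping) measure on {0,1}^N, as the outer measure
    inf { sum_i 2^-|w_i| : the cylinders [w_i] cover A }. *)
Definition cyl (w : seq bool) (r : nat -> bool) : Prop :=
  forall i, (i < size w)%nat -> nth false w i = r i.

Definition covers (c : nat -> option (seq bool)) (A : (nat -> bool) -> Prop) : Prop :=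
  forall r, A r -> exists i w, c i = Some w /\ cyl w r.

Definition cover_wt (c : nat -> option (seq bool)) (i : nat) : R :=
  match c i with Some w => (/ 2) ^ (size w) | None => 0 end.

(** prob_ge A t  <->  Pr_R[A] >= t  (every cylinder cover has weight >= t;
    covers of infinite weight are irrelevant). *)
Definition prob_ge (A : (nat -> bool) -> Prop) (t : R) : Prop :=
  forall c s, covers c A -> infinite_sum (cover_wt c) s -> t <= s.

(** exp_len_ge L P b  <->  E_{x~P, R}[ L x R ] >= b, where the expectation of
    the nat-valued L x is  sum_{n>=0} Pr_R[ L x R > n ]  (possibly +infinity):
    b is below every upper bound of the finite partial sums
    sum_x P x * sum_{n < n0} t x n, with t x n <= Pr_R[L x R > n]. *)
Definition exp_len_ge (N : nat) (L : 'I_N -> (nat -> bool) -> nat)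
    (P : 'I_N -> R) (b : R) : Prop :=
  forall ub : R,
    (forall (n0 : nat) (t : 'I_N -> nat -> R),
        (forall x n, prob_ge (fun r => (n < L x r)%nat) (t x n)) ->
        rsum (fun x => P x * \big[Rplus/0]_(n < n0) t x n) <= ub) ->
    b <= ub.

Definition is_k (a k : nat) : Prop :=
  INR k * sqrt (log2 (INR k)) <= INR a /\
  forall k' : nat, INR k' * sqrt (log2 (INR k')) <= INR a -> (k' <= k)%nat.

Definition P_mS (k : nat) (N : nat) (m : 'I_N) (S : {set 'I_N}) (x : 'I_N) : R :=
  if x == m then 1 - / log2 (INR k)
  else / (INR k ^ 2 * log2 (INR k)).

Definition Q_S (k : nat) (N : nat) (S : {set 'I_N}) (x : 'I_N) : R :=
  if x \in S then / (INR k * sqrt (log2 (INR k)))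
  else / (INR k ^ 2 - INR k) * (1 - INR (k + 1) / (INR k * sqrt (log2 (INR k)))).

Definition in_family (k : nat) (P Q : 'I_(k ^ 2 + 1) -> R) : Prop :=
  exists (m : 'I_(k ^ 2 + 1)) (S : {set 'I_(k ^ 2 + 1)}),
    m \in S /\ #|S| = k.+1 /\ P = P_mS k m S /\ Q = Q_S k S.
Arguments in_family k P Q : clear implicits.
Arguments P_mS k {N} m S x.
Arguments Q_S k {N} S x.

(* Main.v *)
Require Import Defs.
From Stdlib Require Import Reals Lra Lia Classical ClassicalEpsilon.
From HB Require Import structures.
From mathcomp Require Import all_boot zify.

Module Part1.
Set Implicit Arguments. Unset Strict Implicit. Unset Printing Implicit Defensive.
Local Open Scope R_scope.

HB.instance Definition _ := Monoid.isComLaw.Build R 0 Rplus (fun a b c => esym (Rplus_assoc a b c)) Rplus_comm Rplus_0_l.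

Lemma Rsum_le (I : Type) (r : seq I) (P : pred I) (F1 F2 : I -> R) :
  (forall i, P i -> F1 i <= F2 i) ->
  \big[Rplus/0]_(i <- r | P i) F1 i <= \big[Rplus/0]_(i <- r | P i) F2 i.
Proof.
move=> H; apply: (big_ind2 (fun x y => x <= y)) => //; [lra| intros; lra].
Qed.

Lemma Rsum_ge0 (I : Type) (r : seq I) (P : pred I) (F : I -> R) :
  (forall i, P i -> 0 <= F i) -> 0 <= \big[Rplus/0]_(i <- r | P i) F i.
Proof.
move=> H; apply: (big_ind (fun x => 0 <= x)) => //; [lra| intros; lra].
Qed.

Lemma INR_sum (I : Type) (r : seq I) (P : pred I) (F : I -> nat) :
  INR (\sum_(i <- r | P i) F i) = \big[Rplus/0]_(i <- r | P i) INR (F i).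
Proof. apply: (big_morph INR) => //; exact: plus_INR. Qed.

Lemma Rsum_scal (I : Type) (r : seq I) (P : pred I) (F : I -> R) c :
  c * \big[Rplus/0]_(i <- r | P i) F i = \big[Rplus/0]_(i <- r | P i) (c * F i).
Proof. apply: (big_morph (fun x => c * x)); [move=> ? ? /=; ring| ring]. Qed.

Lemma sum_f_le (f : nat -> R) s : (forall i, 0 <= f i) -> infinite_sum f s ->
  forall n, sum_f_R0 f n <= s.
Proof.
move=> f0 Hs n; apply: Rnot_lt_le => Hlt.
have [N HN] := Hs (sum_f_R0 f n - s) ltac:(lra).
have := HN (Nat.max N n) (Nat.le_max_l _ _).
have mono : forall m, sum_f_R0 f n <= sum_f_R0 f (n + m).
  elim=> [|m IH]; first by rewrite addn0; lra.
  rewrite addnS /=; have := f0 (S (n+m)); lra.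
have := mono (Nat.max N n - n)%N.
have -> : (n + (Nat.max N n - n))%N = Nat.max N n by lia.
rewrite /R_dist; move=> h1; rewrite Rabs_right; lra.
Qed.

Lemma big_le_inf (f : nat -> R) s M : (forall i, 0 <= f i) -> infinite_sum f s ->
  \big[Rplus/0]_(i < M) f i <= s.
Proof.
move=> f0 Hs.
have H := sum_f_le f0 Hs.
have: 0 <= s by have := H 0%nat; have := f0 0%nat; simpl; lra.
case: M => [|M]; first by rewrite big_ord0.
move=> _; suff -> : \big[Rplus/0]_(i < M.+1) f i = sum_f_R0 f M by apply: H.
elim: M => [|M IH]; first by rewrite big_ord_recr big_ord0 /=; ring.
by rewrite big_ord_recr IH.
Qed.

End Part1.
Import Part1.

Module Part2.
Set Implicit Arguments. Unset Strict Implicit. Unset Printing Implicit Defensive.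

Definition cylb (w : seq bool) (r : nat -> bool) : bool := w == mkseq r (size w).

Lemma cylP w r : reflect (cyl w r) (cylb w r).
Proof.
apply: (iffP eqP) => [E i Hi|H].
  by rewrite E nth_mkseq.
apply: (eq_from_nth (x0:=false)); first by rewrite size_mkseq.
move=> i Hi.
by rewrite nth_mkseq // H.
Qed.

Definition hit (c : nat -> option (seq bool)) M (r : nat -> bool) : bool :=
  [exists i : 'I_M, if c i is Some w then cylb w r else false].

Definition fM N (c : 'I_N -> nat -> option (seq bool)) M r :=
  #|[set j | hit (c j) M r]|.

Lemma fM_mono N (c : 'I_N -> nat -> option (seq bool)) M M' r :
  (M <= M')%N -> (fM c M r <= fM c M' r)%N.
Proof.
move=> HM; apply: subset_leq_card; apply/subsetP => j; rewrite !inE.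
case/existsP => i Hi; apply/existsP; exists (widen_ord HM i) => //.
Qed.

Lemma fin_bound (T : finType) (P : T -> nat -> Prop) :
  (forall t n n', P t n -> (n <= n')%N -> P t n') ->
  (forall t, exists n, P t n) -> exists n, forall t, P t n.
Proof.
move=> Pm H.
pose f t := proj1_sig (constructive_indefinite_description _ (H t)).
exists (\max_t f t) => t; apply: (Pm t (f t)).
  exact: (proj2_sig (constructive_indefinite_description _ (H t))).
exact: leq_bigmax.
Qed.

Lemma fM_prefix N (c : 'I_N -> nat -> option (seq bool)) M D :
  (forall j i w, (i < M)%N -> c j i = Some w -> (size w <= D)%N) ->
  forall r r', (forall i, (i < D)%N -> r i = r' i) -> fM c M r = fM c M r'.
Proof.
move=> HD r r' Hr; rewrite /fM; apply: eq_card => j; rewrite !inE.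
apply: eq_existsb => i; case E: (c j i) => [w|] //.
rewrite /cylb /mkseq; congr (_ == _); apply/eq_in_map => x; rewrite mem_iota => /andP[_ Hx].
apply: Hr; have := HD j i w (ltn_ord i) E; lia.
Qed.

Section Compact.
Variables (N : nat) (c : 'I_N -> nat -> option (seq bool)) (G : nat).

Definition bad (p : seq bool) := forall M, exists r,
  (forall i, (i < size p)%N -> r i = nth false p i) /\ (fM c M r < G)%N.

Lemma bad_step p : bad p -> bad (rcons p false) \/ bad (rcons p true).
Proof.
move=> Hp; apply: NNPP => H; move/not_or_and: H => [H0 H1].
move/not_all_ex_not: H0 => [M0 H0]; move/not_all_ex_not: H1 => [M1 H1].
have [r [Hr Hf]] := Hp (maxn M0 M1).
have ext : forall b, r (size p) = b -> (forall i, (i < size (rcons p b))%N -> r i = nth false (rcons p b) i).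
  move=> b Hb i; rewrite size_rcons nth_rcons ltnS leq_eqVlt.
  case/orP=> [/eqP ->|Hi]; first by rewrite ltnn eqxx.
  by rewrite Hi; apply: Hr.
case Eb: (r (size p)).
  apply: H1; exists r; split; first exact: ext.
  apply: leq_ltn_trans Hf; apply: fM_mono; exact: leq_maxr.
apply: H0; exists r; split; first exact: ext.
apply: leq_ltn_trans Hf; apply: fM_mono; exact: leq_maxl.
Qed.

Definition next (p : seq bool) : seq bool :=
  if excluded_middle_informative (bad (rcons p false)) then rcons p false
  else rcons p true.

Lemma next_bad p : bad p -> bad (next p).
Proof.
rewrite /next => Hp; case: excluded_middle_informative => // Hn.
by case: (bad_step Hp).
Qed.

Definition pref n := iter n next [::].

Lemma pref_size n : size (pref n) = n.
Proof.
elim: n => //= n IH; rewrite /next; destruct excluded_middle_informative;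
by rewrite size_rcons IH.
Qed.

Lemma pref_stable n d i : (i < n)%N -> nth false (pref (n + d)) i = nth false (pref n) i.
Proof.
move=> Hi; elim: d => [|d IH]; first by rewrite addn0.
rewrite addnS /= /next; destruct excluded_middle_informative;
by rewrite nth_rcons pref_size (leq_trans Hi (leq_addr _ _)) IH.
Qed.

End Compact.

Lemma compactK N (c : 'I_N -> nat -> option (seq bool)) (a : 'I_N -> (nat -> bool) -> bool) G :
  (forall j, covers (c j) (fun r => a j r)) ->
  (forall r, (G <= #|[set j | a j r]|)%N) -> exists M, forall r, (G <= fM c M r)%N.
Proof.
move=> Hcov HG; apply: NNPP => Hno.
have Hall : forall M, exists r, (fM c M r < G)%N.
  move=> M; apply: NNPP => H; apply: Hno; exists M => r.
  rewrite leqNgt; apply/negP => Hlt; apply: H; by exists r.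
have B0 : bad c G [::] by move=> M; have [r Hr] := Hall M; exists r; split.
have Bn : forall n, bad c G (pref c G n).
  elim => //= n IH; exact: next_bad.
pose r := fun i => nth false (pref c G i.+1) i.
have Hr : forall n i, (i < n)%N -> r i = nth false (pref c G n) i.
  move=> n i Hi; rewrite /r.
  have := pref_stable c G (n - i.+1) (ltnSn i); rewrite (subnKC Hi).
  by move=> <-.
have [M HM] : exists M, forall j, a j r -> hit (c j) M r.
  apply: fin_bound.
    move=> j n n' H Hn Ha; case/existsP: (H Ha) => i Hi; apply/existsP.
    by exists (widen_ord Hn i).
  move=> j; case Ha: (a j r); last by exists 0%N.
  have [i [w [Ei Hw]]] := Hcov j r Ha.
  exists i.+1 => _; apply/existsP; exists (Ordinal (ltnSn i)); rewrite /= Ei.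
  exact/cylP.
have HfM : (G <= fM c M r)%N.
  apply: leq_trans (HG r) _; apply: subset_leq_card; apply/subsetP => j.
  rewrite !inE; exact: HM.
have [D HD] : exists D, forall (t : 'I_N * 'I_M) w, c t.1 t.2 = Some w -> (size w <= D)%N.
  apply: fin_bound.
    move=> t n n' H Hn w E; exact: leq_trans (H w E) Hn.
  move=> t; case E: (c t.1 t.2) => [w|]; last by exists 0%N.
  by exists (size w) => w'; case=> <-.
have HD' : forall j i w, (i < M)%N -> c j i = Some w -> (size w <= D)%N.
  move=> j i w Hi E; exact: (HD (j, Ordinal Hi) w E).
have [r' [Hr' Hf']] := Bn D M.
have E : fM c M r = fM c M r'.
  apply: (fM_prefix HD') => i Hi; rewrite Hr' ?pref_size //.
  exact: Hr.
by rewrite E leqNgt Hf' in HfM.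
Qed.

End Part2.
Import Part2.

Module Part3.
Set Implicit Arguments. Unset Strict Implicit. Unset Printing Implicit Defensive.

Fixpoint all_seqs n : seq (seq bool) :=
  if n is n'.+1 then map (cons false) (all_seqs n') ++ map (cons true) (all_seqs n')
  else [:: [::]].

Lemma size_all_seqs n : size (all_seqs n) = (2 ^ n)%N.
Proof. elim: n => //= n IH; rewrite size_cat !size_map IH expnS; lia. Qed.

Lemma all_seqs_size n p : p \in all_seqs n -> size p = n.
Proof.
elim: n p => [|n IH] p /=; first by rewrite inE => /eqP ->.
rewrite mem_cat => /orP[] /mapP [q Hq ->] /=; by rewrite IH.
Qed.

Lemma count_pref D w : (size w <= D)%N ->
  count (fun p => take (size w) p == w) (all_seqs D) = (2 ^ (D - size w))%N.
Proof.
elim: D w => [|D IH] w Hw.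
  by case: w Hw.
case: w Hw => [|b w] Hw.
  rewrite subn0 -size_all_seqs -[size (all_seqs _)]count_predT; apply: eq_count => p.
  by rewrite take0.
rewrite /= count_cat !count_map /= subSS.
have E : forall b', count (preim (cons b') (fun p => take (size w).+1 p == b :: w)) (all_seqs D)
   = if b' == b then (2 ^ (D - size w))%N else 0%N.
  move=> b'; rewrite -(IH w) //; case: (eqVneq b' b) => [Eb|ne].
    by rewrite Eb; apply: eq_count => p /=; rewrite eqseq_cons eqxx.
  elim: (all_seqs D) => //= q s ->; rewrite eqseq_cons (negbTE ne) //.
rewrite !E; clear E Hw; case: b => /=; lia.
Qed.

Lemma cylb_take w p : (size w <= size p)%N ->
  cylb w (fun i => nth false p i) = (take (size w) p == w).
Proof.
move=> Hw; rewrite /cylb eq_sym; congr (_ == _).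
apply: (eq_from_nth (x0 := false)); first by rewrite size_mkseq size_takel.
move=> i; rewrite size_mkseq => Hi.
by rewrite nth_mkseq // nth_take.
Qed.

Lemma sum_count (T : Type) (s : seq T) (P : pred T) :
  (\sum_(p <- s) (P p : nat))%N = count P s.
Proof. elim: s => [|x s IH]; [by rewrite big_nil | by rewrite big_cons IH]. Qed.

Lemma sum_const_seq (T : Type) (s : seq T) G :
  (\sum_(p <- s) G)%N = (G * size s)%N.
Proof. elim: s => [|x s IH]; [by rewrite big_nil muln0 | rewrite big_cons IH /=; lia]. Qed.

Lemma sum_seq_le (T : eqType) (s : seq T) (F1 F2 : T -> nat) :
  (forall x, x \in s -> (F1 x <= F2 x)%N) ->
  (\sum_(x <- s) F1 x <= \sum_(x <- s) F2 x)%N.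
Proof.
elim: s => [|x s IH] H; first by rewrite !big_nil.
rewrite !big_cons; apply: leq_add; first by apply: H; rewrite inE eqxx.
by apply: IH => y Hy; apply: H; rewrite inE Hy orbT.
Qed.

Lemma INR_expn2 n : INR (2 ^ n)%N = pow 2 n.
Proof. elim: n => //= n IH; rewrite expnS mult_INR IH /=; ring. Qed.

Local Open Scope R_scope.

Lemma finite_count N (c : 'I_N -> nat -> option (seq bool)) M D G :
  (forall j i w, (i < M)%N -> c j i = Some w -> (size w <= D)%N) ->
  (forall r, (G <= fM c M r)%N) ->
  INR G <= \big[Rplus/0]_(j : 'I_N) \big[Rplus/0]_(i < M) cover_wt (c j) i.
Proof.
move=> HD HG.
pose ind j (i : 'I_M) (p : seq bool) : nat :=
  if c j i is Some w then ((take (size w) p == w) : nat) else 0%N.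
have H1 : forall p, p \in all_seqs D -> (G <= \sum_j \sum_(i < M) ind j i p)%N.
  move=> p Hp; have Hsz := all_seqs_size Hp.
  apply: leq_trans (HG (fun i => nth false p i)) _.
  rewrite /fM -sum1_card big_mkcond /=; apply: leq_sum => j _; rewrite inE.
  case: ifP => // /existsP [i Hi]; rewrite (bigD1 i) //= /ind.
  move: Hi; case E: (c j i) => [w|] // Hw.
  rewrite -cylb_take ?Hw //; first by rewrite Hsz; exact: (HD j i w (ltn_ord i) E).
have H2 : (G * 2 ^ D <= \sum_j \sum_(i < M) \sum_(p <- all_seqs D) ind j i p)%N.
  rewrite -size_all_seqs -sum_const_seq.
  apply: (@leq_trans (\sum_(p <- all_seqs D) \sum_j \sum_(i < M) ind j i p)).
    exact: sum_seq_le.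
  rewrite exchange_big; apply: eq_leq; apply: eq_bigr => j _; exact: exchange_big.
have H3 : forall j (i : 'I_M), (\sum_(p <- all_seqs D) ind j i p)%N =
    if c j i is Some w then (2 ^ (D - size w))%N else 0%N.
  move=> j i; rewrite /ind; case E: (c j i) => [w|]; last by rewrite big1.
  rewrite sum_count count_pref //; exact: (HD j i w (ltn_ord i) E).
have H4 := le_INR _ _ (elimT leP H2).
have E : INR (\sum_j \sum_(i < M) \sum_(p <- all_seqs D) ind j i p)%N =
    2 ^ D * \big[Rplus/0]_(j : 'I_N) \big[Rplus/0]_(i < M) cover_wt (c j) i.
  rewrite INR_sum Rsum_scal; apply: eq_bigr => j _.
  rewrite INR_sum Rsum_scal; apply: eq_bigr => i _.
  rewrite H3 /cover_wt; case E: (c j i) => [w|]; last by simpl; ring.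
  have Hs := HD j i w (ltn_ord i) E.
  rewrite INR_expn2 -{2}(subnK Hs) pow_add Rmult_assoc -Rpow_mult_distr Rinv_r; last lra.
  rewrite pow1; ring.
rewrite E mult_INR INR_expn2 in H4.
have Hp : 0 < 2 ^ D by apply: pow_lt; lra.
apply: (Rmult_le_reg_r (2 ^ D)) => //; lra.
Qed.

Lemma lemmaK N (c : 'I_N -> nat -> option (seq bool)) (a : 'I_N -> (nat -> bool) -> bool)
  G (s : 'I_N -> R) :
  (forall j, covers (c j) (fun r => a j r)) ->
  (forall j, infinite_sum (cover_wt (c j)) (s j)) ->
  (forall r, (G <= #|[set j | a j r]|)%N) ->
  INR G <= \big[Rplus/0]_(j : 'I_N) s j.
Proof.
move=> Hcov Hs HG.
have [M HM] := compactK Hcov HG.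
have [D HD] : exists D, forall (t : 'I_N * 'I_M) w, c t.1 t.2 = Some w -> (size w <= D)%N.
  apply: fin_bound.
    move=> t n n' H Hn w E; exact: leq_trans (H w E) Hn.
  move=> t; case E: (c t.1 t.2) => [w|]; last by exists 0%N.
  by exists (size w) => w'; case=> <-.
have HD' : forall j i w, (i < M)%N -> c j i = Some w -> (size w <= D)%N.
  move=> j i w Hi E; exact: (HD (j, Ordinal Hi) w E).
apply: Rle_trans (finite_count HD' HM) _.
apply: Rsum_le => j _; apply: big_le_inf => // i.
rewrite /cover_wt; case: (c j i) => [w|]; last lra.
apply: pow_le; lra.
Qed.

End Part3.
Import Part3.

Module Part4.
Set Implicit Arguments. Unset Strict Implicit. Unset Printing Implicit Defensive.
Local Open Scope R_scope.

Lemma cover_wt_ge0 c i : 0 <= cover_wt c i.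
Proof. rewrite /cover_wt; case: (c i) => [w|]; [apply: pow_le; lra| lra]. Qed.

Lemma inf_sum_ge0 c s : infinite_sum (cover_wt c) s -> 0 <= s.
Proof.
move=> H; have := sum_f_le (@cover_wt_ge0 c) H 0%N; have := cover_wt_ge0 c 0; simpl; lra.
Qed.

Lemma prob_ge0 A : prob_ge A 0.
Proof. move=> c s _ H; exact: inf_sum_ge0 H. Qed.

Definition c0 (i : nat) : option (seq bool) := if i is 0%N then Some [::] else None.

Lemma c0_covers A : covers c0 A.
Proof. by move=> r _; exists 0%N, [::]; split => // i. Qed.
Arguments c0_covers : clear implicits.

Lemma c0_sum : infinite_sum (cover_wt c0) 1.
Proof.
have H : forall n, sum_f_R0 (cover_wt c0) n = 1.
  elim=> [|n IH] /=; first by rewrite /cover_wt /=; ring.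
  by rewrite IH /cover_wt /=; ring.
move=> e He; exists 0%N => n _; rewrite H /R_dist Rminus_diag Rabs_R0; lra.
Qed.

Lemma omeas_bound A : bound (fun t => prob_ge A t).
Proof. exists 1 => t Ht; exact: (Ht c0 1 (c0_covers A) c0_sum). Qed.

Lemma omeas_ne A : exists t, prob_ge A t.
Proof. exists 0; exact: prob_ge0. Qed.

Definition omeas A : R := proj1_sig (completeness _ (omeas_bound A) (omeas_ne A)).

Lemma omeas_lub A : is_lub (fun t => prob_ge A t) (omeas A).
Proof. exact: proj2_sig (completeness _ (omeas_bound A) (omeas_ne A)). Qed.

Lemma omeas_ge A : prob_ge A (omeas A).
Proof.
move=> c s Hc Hs; have [_ H] := omeas_lub A; apply: H => t Ht; exact: (Ht c s Hc Hs).
Qed.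

Lemma omeas_approx A d : 0 < d -> exists cs : (nat -> option (seq bool)) * R,
  covers cs.1 A /\ infinite_sum (cover_wt cs.1) cs.2 /\ cs.2 < omeas A + d.
Proof.
move=> Hd; apply: NNPP => H.
have Hp : prob_ge A (omeas A + d).
  move=> c s Hc Hs; apply: Rnot_lt_le => Hlt; apply: H; exists (c, s); by split.
have [H1 _] := omeas_lub A; have := H1 _ Hp; lra.
Qed.

Lemma iter_Rplus n d : iter n (Rplus d) 0 = INR n * d.
Proof. elim: n => [|n IH] /=; [ring| rewrite IH; case: n IH => [|n] _ /=; ring]. Qed.

Lemma avg_bound N (a : 'I_N -> (nat -> bool) -> bool) G :
  (forall r, (G <= #|[set j | a j r]|)%N) ->
  INR G <= \big[Rplus/0]_(j : 'I_N) omeas (fun r => a j r).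
Proof.
move=> HG; set S := \big[Rplus/0]_(j : 'I_N) _.
apply: Rnot_lt_le => Hlt.
have HN : 0 <= INR N by apply: pos_INR.
pose d := (INR G - S) / (INR N + 1).
have Hd : d * (INR N + 1) = INR G - S by rewrite /d; field; lra.
have Hd0 : 0 < d by rewrite /d; apply: Rdiv_lt_0_compat; lra.
have Hj : forall j : 'I_N, exists cs : (nat -> option (seq bool)) * R,
   covers cs.1 (fun r => a j r) /\ infinite_sum (cover_wt cs.1) cs.2 /\
   cs.2 < omeas (fun r => a j r) + d.
  move=> j; exact: omeas_approx.
pose f j := proj1_sig (constructive_indefinite_description _ (Hj j)).
have Hf j := proj2_sig (constructive_indefinite_description _ (Hj j)).
have HK := @lemmaK N (fun j => (f j).1) a G (fun j => (f j).2)
   (fun j => proj1 (Hf j)) (fun j => proj1 (proj2 (Hf j))) HG.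
have : \big[Rplus/0]_(j : 'I_N) (f j).2 <= \big[Rplus/0]_(j : 'I_N) (omeas (fun r => a j r) + d).
  apply: Rsum_le => j _; have := proj2 (proj2 (Hf j)); rewrite /f; lra.
rewrite big_split /= -/S big_const_ord iter_Rplus.
move=> H; have E : INR N * d = INR G - S - d by rewrite -Hd; ring.
have := Rle_trans _ _ _ HK H; lra.
Qed.

End Part4.
Import Part4.

Module Part5.
Set Implicit Arguments. Unset Strict Implicit. Unset Printing Implicit Defensive.

Fixpoint all_le n : seq (seq bool) :=
  if n is n'.+1 then [::] :: (map (cons false) (all_le n') ++ map (cons true) (all_le n'))
  else [:: [::]].

Lemma size_all_le n : (size (all_le n) < 2 ^ n.+1)%N.
Proof.
elim: n => [|n IH] //=; rewrite size_cat !size_map.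
have := expnS 2 n.+1; lia.
Qed.

Lemma mem_all_le n p : (size p <= n)%N -> p \in all_le n.
Proof.
elim: n p => [|n IH] [|b p] //= Hp.
rewrite inE mem_cat; apply/orP; right; case: b.
  by apply/orP; right; apply: map_f; apply: IH.
by apply/orP; left; apply: map_f; apply: IH.
Qed.

Lemma count_long N (w : 'I_N -> seq bool) n : injective w ->
  (N <= #|[set m | (n < size (w m))%N]| + 2 ^ n.+1)%N.
Proof.
move=> Hw; rewrite -{1}(card_ord N) -(cardsC [set m | (n < size (w m))%N]) leq_add2l.
apply: ltnW; apply: leq_ltn_trans (size_all_le n).
rewrite cardE -(size_map w); apply: uniq_leq_size.
  by rewrite (map_inj_uniq Hw) enum_uniq.
move=> x /mapP [m]; rewrite mem_enum inE inE -leqNgt => Hm ->.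
exact: mem_all_le.
Qed.

Lemma extend_set N (A : {set 'I_N}) n : (#|A| <= n)%N -> (n <= N)%N ->
  exists S : {set 'I_N}, A \subset S /\ #|S| = n.
Proof.
move=> H1 H2; move: {2}(n - #|A|)%N (erefl (n - #|A|)%N) => d.
elim: d A H1 => [|d IH] A H1 Hd.
  exists A; split => //; lia.
have HC : (0 < #|~: A|)%N.
  have := cardsC A; rewrite card_ord; lia.
case/card_gt0P: HC => x Hx; rewrite in_setC in Hx.
have Hc : #|x |: A| = #|A|.+1 by rewrite cardsU1 Hx.
have [S [HS1 HS2]] := IH (x |: A) ltac:(lia) ltac:(lia).
exists S; split => //; apply: subset_trans HS1; exact: subsetUr.
Qed.

Lemma exists_max (T : finType) (x0 : T) (f : T -> R) : exists m, forall m', Rle (f m') (f m).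
Proof.
have H : forall s : seq T, exists m, forall m', m' \in s -> Rle (f m') (f m).
  elim=> [|x s [m Hm]]; first by exists x0.
  case: (Rle_dec (f x) (f m)) => Hx.
    exists m => m'; rewrite inE => /orP [/eqP ->|]; [done|exact: Hm].
  exists x => m'; rewrite inE => /orP [/eqP ->|/Hm]; [exact: Rle_refl|lra].
have [m Hm] := H (enum T); exists m => m'; apply: Hm; by rewrite mem_enum.
Qed.

Lemma sum_gap N K : (2 ^ K <= N)%N ->
  (K * N <= \sum_(n < K) (N - 2 ^ n.+1) + 2 ^ K.+1)%N.
Proof.
elim: K => [|K IH] H; first by rewrite big_ord0.
rewrite big_ord_recr /=.
have E1 := expnS 2 K; have E2 := expnS 2 K.+1.
move: (IH ltac:(lia)); rewrite mulSn.
move: (\sum_(i < K) (N - 2 ^ i.+1)) => s. lia.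
Qed.

End Part5.
Import Part5.

Module Part6.
Set Implicit Arguments. Unset Strict Implicit. Unset Printing Implicit Defensive.
Local Open Scope R_scope.

Lemma ln2_pos : 0 < ln 2.
Proof. have := ln_lt_2; lra. Qed.

Lemma ln_le' x y : 0 < x -> x <= y -> ln x <= ln y.
Proof. move=> Hx [H|->]; [left; exact: ln_increasing| lra]. Qed.

Lemma log2_ge8 K : 256 <= K -> 8 <= log2 K.
Proof.
move=> HK; have H2 := ln2_pos.
have E : ln 256 = 8 * ln 2.
  replace 256 with (2 ^ 8) by ring; rewrite ln_pow; [simpl; ring| lra].
have := @ln_le' 256 K ltac:(lra) HK; rewrite E => H.
rewrite /log2; have : ln K / ln 2 * ln 2 = ln K by field; lra.
nra.
Qed.

Lemma log2_le K : 1 <= K -> log2 K <= 2 * (K - 1).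
Proof.
move=> HK; have H2 := ln_lt_2; have H2' := ln2_pos.
have HlnK : ln K <= K - 1.
  case: (Req_dec K 1) => [->|ne]; first by rewrite ln_1; lra.
  have := exp_ineq1 (K - 1) ltac:(lra) => He.
  have := ln_increasing K (exp (K - 1)) ltac:(lra) ltac:(lra); rewrite ln_exp; lra.
have HlnK0 : 0 <= ln K by rewrite -ln_1; apply: ln_le'; lra.
rewrite /log2; have E : ln K / ln 2 * ln 2 = ln K by field; lra.
nra.
Qed.

Lemma INR_expn x n : INR (x ^ n)%N = INR x ^ n.
Proof. elim: n => //= n IH; rewrite expnS mult_INR IH /=; ring. Qed.

Lemma card_sum N (S : {set 'I_N}) : (\sum_(x : 'I_N) ((x \in S) : nat))%N = #|S|.
Proof. rewrite -sum1_card [RHS]big_mkcond /=; apply: eq_bigr => x _; by case: (x \in S). Qed.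

Lemma rsum_if N (S : {set 'I_N}) u v :
  rsum (fun x => if x \in S then u else v) = INR #|S| * u + INR (N - #|S|) * v.
Proof.
have E : forall x, (if x \in S then u else v) = u * INR (x \in S) + v * INR (x \in ~: S).
  by move=> x; rewrite in_setC; case: (x \in S) => /=; ring.
have -> : rsum (fun x => if x \in S then u else v) =
  \big[Rplus/0]_(x : 'I_N) (u * INR (x \in S) + v * INR (x \in ~: S)).
  by apply: eq_bigr => x _; exact: E.
rewrite big_split /= -!Rsum_scal -!INR_sum !card_sum.
have HC := cardsC S; rewrite card_ord in HC.
have -> : (N - #|S| = #|~: S|)%N by lia.
by rewrite (Rmult_comm u) (Rmult_comm v).
Qed.

Section Family.
Variables (k a : nat).
Hypothesis Hk : 256 <= INR k.
Hypothesis Ha : INR k * sqrt (log2 (INR k)) <= INR a.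

Let K := INR k.
Let L := log2 (INR k).
Let sL := sqrt L.

Lemma HL : 8 <= L. Proof. exact: log2_ge8. Qed.
Lemma HsL2 : sL * sL = L. Proof. have := HL; rewrite /sL => H; apply: sqrt_sqrt; lra. Qed.
Lemma HsL : 2 <= sL.
Proof.
have := HL; have := HsL2; have : 0 <= sL by apply: sqrt_pos. nra.
Qed.
Lemma HsLK : sL <= K - 1.
Proof.
have H1 := HsL; have H2 := HsL2.
have H3 : L <= 2 * (K - 1) by apply: log2_le; rewrite /K; lra.
have H4 : 0 <= (sL - 2) * sL by apply: Rmult_le_pos; lra.
nra.
Qed.

Lemma Pdist (m : 'I_(k ^ 2 + 1)) S : is_dist (P_mS k m S).
Proof.
have HL := HL; have HK0 : 256 <= K := Hk; have HK : 0 < K by lra.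
have iL : 0 < / L by apply: Rinv_0_lt_compat; lra.
have iL1 : / L * L = 1 by field; lra.
split.
  move=> x; rewrite /P_mS -/L; case: (x == m); first nra.
  left; apply: Rinv_0_lt_compat; apply: Rmult_lt_0_compat; [apply: pow_lt|]; lra.
rewrite /rsum.
have E : forall x : 'I_(k ^ 2 + 1), P_mS k m S x =
   if x \in [set m] then 1 - / log2 (INR k) else / (INR k ^ 2 * log2 (INR k)).
  by move=> x; rewrite in_set1.
rewrite (eq_bigr _ (fun x _ => E x)) -/(rsum _) rsum_if cards1 addnK INR_expn -/K -/L /=.
field; lra.
Qed.

Lemma Qdist (S : {set 'I_(k ^ 2 + 1)}) : #|S| = k.+1 -> is_dist (Q_S k S).
Proof.
move=> HS; have HL := HL; have HsL := HsL; have HsLK := HsLK; have HK : 256 <= K := Hk.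
have HX : 0 < K * sL by nra.
have HD : 0 < INR k ^ 2 - INR k by rewrite -/K; nra.
have Hq : INR (k + 1) / (INR k * sqrt (log2 (INR k))) <= 1.
  rewrite plus_INR -/K -/L -/sL /=.
  set q := (K + 1) / (K * sL).
  have : q * (K * sL) = K + 1 by rewrite /q; field; lra.
  nra.
split.
  move=> x; rewrite /Q_S; case: (x \in S).
    left; apply: Rinv_0_lt_compat; rewrite -/K -/L -/sL; lra.
  apply: Rmult_le_pos; [left; apply: Rinv_0_lt_compat; lra| lra].
rewrite /Q_S rsum_if HS.
have Hkk : (k <= k ^ 2)%N by rewrite expnS expn1 leq_pmulr //; apply/ltP; apply: INR_lt; simpl; lra.
have E : INR (k ^ 2 + 1 - k.+1) = INR k ^ 2 - INR k.
  have : (k ^ 2 + 1 - k.+1 + k = k ^ 2)%N by lia.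
  move/(f_equal INR); rewrite plus_INR INR_expn => <-; ring.
rewrite E S_INR plus_INR INR_1 -/K -/L -/sL.
rewrite -/K in HD; field; split; lra.
Qed.

Lemma PQclose (m : 'I_(k ^ 2 + 1)) (S : {set 'I_(k ^ 2 + 1)}) : m \in S -> close (INR a) (P_mS k m S) (Q_S k S).
Proof.
move=> HmS x.
have HL := HL; have HsL := HsL; have HsLK := HsLK; have HsL2 := HsL2; have HK : 256 <= K := Hk.
have HA : K * sL <= INR a := Ha.
set A := INR a in HA *.
set X := K * sL in HA *.
have HX2 : 2 * K <= X by rewrite /X; nra.
have HXD : X <= K ^ 2 - K by rewrite /X /=; nra.
have HXX : X * X = K ^ 2 * L by rewrite /X -HsL2 /=; ring.
have HXp : 0 < X by lra.
have HAp : 0 < A by lra.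
have HDp : 0 < K ^ 2 - K by lra.
set iX := / X. set iA := / A. set iD := / (K ^ 2 - K). set iL := / L.
have EX : X * iX = 1 by rewrite /iX; field; lra.
have EA : A * iA = 1 by rewrite /iA; field; lra.
have ED : (K ^ 2 - K) * iD = 1 by rewrite /iD; field; lra.
have EL : L * iL = 1 by rewrite /iL; field; lra.
have iXp : 0 < iX by apply: Rinv_0_lt_compat.
have iAp : 0 < iA by apply: Rinv_0_lt_compat.
have iDp : 0 < iD by apply: Rinv_0_lt_compat.
have iLp : 0 < iL by apply: Rinv_0_lt_compat; lra.
have iX_le : iX <= / 512 by nra.
have iA_le : iA <= iX by nra.
have iD_le : iD <= iX by nra.
have iL_le : iL <= / 8 by nra.
have AiX : 1 <= A * iX by nra.
have Ep2 : / (INR k ^ 2 * log2 (INR k)) = iX * iX.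
  rewrite -/K -/L -HXX /iX; field; lra.
have Eq1 : / (INR k * sqrt (log2 (INR k))) = iX by [].
rewrite /P_mS /Q_S Ep2 Eq1 -/K -/L -/iL plus_INR INR_1 -/K -/sL -/X -/iD.
have Hkx : 0 <= 1 - (K + 1) / X <= 1.
  have : (K + 1) / X = (K + 1) * iX by [].
  move=> ->; split; nra.
case: eqP => [Hxm|Hxm].
  rewrite Hxm HmS; split; nra.
case: (x \in S).
  split; nra.
have H1 : iD * (1 - (K + 1) / X) <= iX by nra.
have HiXX : iX * iX <= iD.
  have : K ^ 2 - K <= X * X by rewrite HXX; nra.
  nra.
split.
  have : iA * (iD * (1 - (K + 1) / X)) <= iX * iX.
    apply: Rmult_le_compat => //; [lra| nra].
  by [].
have Hq : / 4 <= 1 - (K + 1) / X.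
  have : (K + 1) / X = (K + 1) * iX by [].
  move=> ->; nra.
set q := 1 - (K + 1) / X in Hq *.
have HAD : 0 <= A * iD by nra.
have : A * iD * / 4 <= A * iD * q by apply: Rmult_le_compat_l.
have : iD <= A * iD * / 4 by nra.
rewrite Rmult_assoc; lra.
Qed.

End Family.

End Part6.
Import Part6.

Local Open Scope R_scope.

Theorem mainTheorem4 :
  exists a0 : nat, forall a : nat, (a0 <= a)%nat ->
  forall k : nat, is_k a k ->
  forall (E : encoder (k ^ 2 + 1)) (D : decoder (k ^ 2 + 1)),
    error_free E D ->
    exists P Q : 'I_(k ^ 2 + 1) -> R,
      in_family k P Q /\
      exp_len_ge (fun x r => size (E x a r P)) P
        (2 * log2 (INR k) - 2 * log2 (log2 (INR k))).
Proof.
exists 768%N => a Ha0 k Hk E D Herr.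
have Ha1 : (1 <= a)%N by apply: leq_trans Ha0.
have H256 : INR 256 = 256 by rewrite INR_IZR_INZ.
have Hlog256 : log2 (INR 256) = 8.
  have -> : INR 256 = 2 ^ 8 by rewrite -INR_expn2.
  rewrite /log2 ln_pow; last lra.
  have := ln2_pos => ?; simpl; field; lra.
have Hk256 : (256 <= k)%N.
  apply: (proj2 Hk 256%N); rewrite Hlog256 H256.
  have Hs8 : sqrt 8 <= 3.
    have -> : 3 = sqrt (3 * 3) by rewrite sqrt_square; lra.
    apply: sqrt_le_1_alt; lra.
  have : INR 768 <= INR a by apply: le_INR; apply/leP.
  rewrite INR_IZR_INZ /=; nra.
have HK : 256 <= INR k.
  rewrite -H256; apply: le_INR; exact/leP.
have Ha : INR k * sqrt (log2 (INR k)) <= INR a := proj1 Hk.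
have HL : 8 <= log2 (INR k) := log2_ge8 HK.
set L := log2 (INR k) in HL Ha *.
have Hkk : (k <= k ^ 2)%N by rewrite expnS expn1 leq_pmulr //; lia.
pose N := (k ^ 2 + 1)%N.
pose Pm (m : 'I_(k ^ 2 + 1)) := P_mS k m setT.
have Hinj : forall r, injective (fun m => E m a r (Pm m)).
  move=> r m m' /= Heq; case: (eqVneq m m') => // ne.
  have [S [HS1 HS2]] := @extend_set _ [set m; m'] k.+1
     ltac:(rewrite cards2 ne; lia) ltac:(lia).
  have Hm : m \in S by apply: (subsetP HS1); rewrite !inE eqxx.
  have Hm' : m' \in S by apply: (subsetP HS1); rewrite !inE eqxx orbT.
  have Qd := Qdist HK HS2.
  have E1 := Herr m a r (Pm m) (Q_S k S) Ha1 (Pdist HK m setT) Qd (PQclose HK Ha Hm).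
  have E2 := Herr m' a r (Pm m') (Q_S k S) Ha1 (Pdist HK m' setT) Qd (PQclose HK Ha Hm').
  by rewrite Heq E2 in E1.
pose j := trunc_log 2 k.
pose n0 := (j + j)%N.
pose A m n := fun r => (n < size (E m a r (Pm m)))%N.
pose V m := \big[Rplus/0]_(n < n0) omeas (fun r => A m n r).
have Hav : forall n, INR (N - 2 ^ n.+1) <= \big[Rplus/0]_(m : 'I_(k ^ 2 + 1)) omeas (fun r => A m n r).
  move=> n; apply: (@avg_bound _ (fun m r => A m n r)) => r.
  have := count_long n (Hinj r); rewrite /A /N; lia.
have [mm Hmm] := exists_max (Ordinal (n:=k ^ 2 + 1) (m:=0) ltac:(lia)) V.
have HN : 0 < INR N by apply: lt_0_INR; rewrite /N; lia.
have HV : \big[Rplus/0]_(n < n0) INR (N - 2 ^ n.+1) <= INR N * V mm.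
  apply: (@Rle_trans _ (\big[Rplus/0]_(m : 'I_(k ^ 2 + 1)) V m)).
    rewrite /V exchange_big /=; apply: Rsum_le => n _; exact: Hav.
  apply: (@Rle_trans _ (\big[Rplus/0]_(m : 'I_(k ^ 2 + 1)) V mm)).
    by apply: Rsum_le => m _; apply: Hmm.
  by rewrite big_const_ord iter_Rplus; apply: Req_le.
have Hj1 : (2 ^ j <= k)%N by apply: trunc_logP; lia.
have Hj2 : (k < 2 ^ j.+1)%N by apply: trunc_log_ltn.
have Hn0 : (2 ^ n0 <= N)%N.
  rewrite /n0 expnD /N; have : (2 ^ j * 2 ^ j <= k * k)%N by apply: leq_mul.
  rewrite mulnn; lia.
have Hgap := sum_gap Hn0.
have Hgap' : (n0 * N <= \sum_(n < n0) (N - 2 ^ n.+1) + 2 * N)%N.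
  have := expnS 2 n0; lia.
have HgapR := le_INR _ _ (elimT leP Hgap').
rewrite plus_INR mult_INR mult_INR INR_sum in HgapR.
have HVj : INR n0 - 2 <= V mm.
  have H2 : INR 2 = 2 by [].
  rewrite H2 in HgapR.
  apply: (Rmult_le_reg_l (INR N)) => //.
  have := Rle_trans _ _ _ HgapR (Rplus_le_compat_r (2 * INR N) _ _ HV).
  nra.
have HjL : L < INR j + 1.
  have HkR : INR k < 2 ^ j.+1 by rewrite -INR_expn2; apply: lt_INR; exact/ltP.
  have := ln_increasing (INR k) (2 ^ j.+1) ltac:(lra) HkR.
  rewrite ln_pow; last lra.
  rewrite S_INR => H; have H2 := ln2_pos.
  rewrite /L /log2; apply: (Rmult_lt_reg_r (ln 2)) => //.
  have -> : ln (INR k) / ln 2 * ln 2 = ln (INR k) by field; lra.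
  lra.
have HVL : 2 * L - 4 <= V mm.
  have : INR n0 = INR j + INR j by rewrite plus_INR.
  lra.
have Hlog3 : 3 <= log2 L.
  have H2 := ln2_pos.
  have E8 : ln 8 = 3 * ln 2.
    replace 8 with (2 ^ 3) by ring; rewrite ln_pow; [simpl; ring| lra].
  have := @ln_le' 8 L ltac:(lra) HL; rewrite E8 => H.
  rewrite /log2; have : ln L / ln 2 * ln 2 = ln L by field; lra.
  nra.
have [S [HS1 HS2]] := @extend_set _ [set mm] k.+1 ltac:(by rewrite cards1) ltac:(lia).
have HmmS : mm \in S by apply: (subsetP HS1); rewrite inE.
exists (Pm mm), (Q_S k S); split.
  by exists mm, S.
move=> ub Hub.
pose t x n := if x == mm then omeas (fun r => A mm n r) else 0.
have Ht : forall x n, prob_ge (fun r => (n < size (E x a r (Pm mm)))%N) (t x n).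
  move=> x n; rewrite /t; case: eqP => [->|_]; [exact: (@omeas_ge) | exact: prob_ge0].
have := Hub n0 t Ht.
rewrite /rsum (bigD1 mm) //= [X in _ + X]big1 => [|x Hx]; last first.
  rewrite big1 => [|n _]; first by rewrite Rmult_0_r.
  by rewrite /t (negbTE Hx).
have ET : \big[Rplus/0]_(n < n0) t mm n = V mm by apply: eq_bigr => n _; rewrite /t eqxx.
rewrite ET /Pm /P_mS eqxx -/L => Hfin.
have iLp : 0 < / L by apply: Rinv_0_lt_compat; lra.
have EL : L * / L = 1 by field; lra.
have iL8 : / L <= / 8 by nra.
nra.
Qed.
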